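(* A filtered vector space $(V,\ell)$ satisfies the best approximation property if and only if $\ell(V\setminus\{0\})$ is a well-ordered subset of $\mathbb{R}$.
   Context: A filtered vector space over a field $\kappa$ is a pair $(V,\ell)$ with $V$ a $\kappa$-vector space and $\ell\colon V\to\mathbb{R}\cup\{-\infty\}$ such that $\ell(v)=-\infty$ iff $v=0$, $\ell(cv)=\ell(v)$ for $c\in\kappa\setminus\{0\}$, and $\ell(v+w)\le\max\{\ell(v),\ell(w)\}$. $(V,\ell)$ satisfies the best approximation property if for every proper subspace $W\subsetneq V$ and every $v\in V\setminus W$ there is $w_0\in W$ with $\ell(v-w_0)\le\ell(v-w)$ for all $w\in W$. *)

(* Defs.v *)
From HB Require Import structures.
From mathcomp Require Import all_boot all_order all_algebra.
From mathcomp Require Import boolp classical_sets reals constructive_ereal.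
Set Implicit Arguments. Unset Strict Implicit. Unset Printing Implicit Defensive.
Import Order.TTheory GRing.Theory Num.Theory.
Local Open Scope ring_scope.
Local Open Scope ereal_scope.
Local Open Scope classical_set_scope.

(* A filtration on a K-vector space V with values in R ∪ {-oo},
   modelled as a map into the extended reals that never takes the value +oo. *)
Definition is_filtration (R : realType) (K : fieldType) (V : lmodType K)
    (l : V -> \bar R) : Prop :=
  [/\ forall v, l v != +oo,
      forall v, l v = -oo <-> v = 0%R,
      forall (c : K) v, c != 0%R -> l (c *: v)%R = l v
    & forall v w, l (v + w)%R <= maxe (l v) (l w)].

Definition is_subspace (K : fieldType) (V : lmodType K) (W : set V) : Prop :=
  [/\ W 0%R, forall v w, W v -> W w -> W (v + w)%R
    & forall (c : K) v, W v -> W (c *: v)%R].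

Definition best_approximation_property (R : realType) (K : fieldType)
    (V : lmodType K) (l : V -> \bar R) : Prop :=
  forall W : set V, is_subspace W -> W <> setT ->
  forall v, ~ W v ->
  exists2 w0, W w0 & forall w, W w -> l (v - w0)%R <= l (v - w)%R.

Definition well_ordered_set (R : realType) (S : set R) : Prop :=
  forall A : set R, A `<=` S -> A !=set0 ->
  exists2 m, A m & forall a, A a -> (m <= a)%R.

Definition nonzero_values (R : realType) (K : fieldType) (V : lmodType K)
    (l : V -> \bar R) : set R :=
  [set r : R | exists2 v : V, v != 0%R & l v = r%:E].

(* Main.v *)
Require Import Defs.
From HB Require Import structures.
From mathcomp Require Import all_boot all_order all_algebra.
From mathcomp Require Import boolp classical_sets reals constructive_ereal.
Set Implicit Arguments. Unset Strict Implicit. Unset Printing Implicit Defensive.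
Import Order.TTheory GRing.Theory Num.Theory.
Local Open Scope ring_scope.
Local Open Scope ereal_scope.
Local Open Scope classical_set_scope.

Section S.
Variables (R : realType) (K : fieldType) (V : lmodType K) (l : V -> \bar R).
Hypothesis hl : is_filtration l.

Lemma l0 : l 0%R = -oo.
Proof. by case: hl => _ H _ _; apply/H. Qed.

Lemma lZ (c : K) v : c != 0%R -> l (c *: v)%R = l v.
Proof. by case: hl => _ _ H _; apply: H. Qed.

Lemma lN v : l (- v)%R = l v.
Proof. by rewrite -scaleN1r lZ // oppr_eq0 oner_neq0. Qed.

Lemma lD v w : l (v + w)%R <= maxe (l v) (l w).
Proof. by case: hl => _ _ _ H; apply: H. Qed.

Lemma l_strict x y : l y < l x -> l (x + y)%R = l x.
Proof.
move=> hyx; apply/eqP; rewrite eq_le; apply/andP; split.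
  by apply: (le_trans (lD _ _)); rewrite ge_max lexx ltW.
have := lD (x + y)%R (- y)%R; rewrite addrK lN.
rewrite le_max => /orP[//|]; by rewrite leNgt hyx.
Qed.

Variable f : R -> V.
Definition F (p : seq (R * K)) := (\sum_(q <- p) q.2 *: f q.1)%R.
Definition Sc (p : seq (R * K)) := (\sum_(q <- p) q.2)%R.
Variable A : set R.
Hypothesis hf : forall b, A b -> l (f b) = b%:E.

Lemma boundF (M : R) (P : pred (R * K)) p :
  (forall q, q \in p -> A q.1) ->
  (forall q, q \in p -> P q -> (q.1 < M)%R) ->
  l (\sum_(q <- p | P q) q.2 *: f q.1)%R < M%:E.
Proof.
elim: p => [|q p IH] HA H; first by rewrite big_nil l0 ltNyr.
rewrite big_cons; case: ifP => Pq; last first.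
  by apply: IH => q' q'p; [apply: HA|apply: H]; rewrite inE q'p orbT.
apply: (le_lt_trans (lD _ _)); rewrite gt_max; apply/andP; split; last first.
  by apply: IH => q' q'p; [apply: HA|apply: H]; rewrite inE q'p orbT.
have [->|c0] := eqVneq q.2 0%R; first by rewrite scale0r l0 ltNyr.
by rewrite lZ // hf ?lte_fin; [apply: H => //|apply: HA]; rewrite inE eqxx.
Qed.

Lemma maxseq (p : seq (R * K)) : p != [::] ->
  exists2 q, q \in p & forall q', q' \in p -> (q'.1 <= q.1)%R.
Proof.
elim: p => [//|q p IH] _.
have [->|pn] := eqVneq p [::].
  by exists q; rewrite ?inE ?eqxx // => q'; rewrite inE => /eqP->.
have [q0 q0p Hq0] := IH pn.
have [le|lt] := leP q.1 q0.1.
  exists q0; first by rewrite inE q0p orbT.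
  by move=> q'; rewrite inE => /orP[/eqP->//|]; apply: Hq0.
exists q; first by rewrite inE eqxx.
move=> q'; rewrite inE => /orP[/eqP->//|/Hq0 h].
by apply: (le_trans h); apply: ltW.
Qed.

Lemma mainF n : forall p, (size p <= n)%N ->
  (forall q, q \in p -> A q.1) -> Sc p != 0%R ->
  exists2 b, A b & l (F p) = b%:E.
Proof.
elim: n => [|n IH] p.
  by rewrite leqn0 => /nilP -> _; rewrite /Sc big_nil eqxx.
move=> sp HA S0.
have pn : p != [::] by apply: contraNneq S0 => ->; rewrite /Sc big_nil.
have [q qp Hq] := maxseq pn.
set M := q.1.
have eF : F p = ((\sum_(q' <- p | q'.1 == M) q'.2) *: f M +
     \sum_(q' <- p | q'.1 != M) q'.2 *: f q'.1)%R.
  rewrite /F (bigID (fun q' => q'.1 == M)) /= scaler_suml; congr (_ + _)%R.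
  by apply: eq_bigr => q' /eqP ->.
have eS : Sc p = ((\sum_(q' <- p | q'.1 == M) q'.2) +
     \sum_(q' <- p | q'.1 != M) q'.2)%R.
  by rewrite /Sc (bigID (fun q' => q'.1 == M)).
set cM := (\sum_(q' <- p | q'.1 == M) q'.2)%R in eF eS.
have [c0|c0] := eqVneq cM 0%R; last first.
  exists M; first exact: HA.
  have hM : l (cM *: f M)%R = M%:E by rewrite lZ // hf //; exact: HA.
  rewrite eF l_strict hM //.
  apply: boundF => [q' /HA //|q' q'p /= ne].
  rewrite lt_neqAle ne andTb; exact: Hq.
set p' := [seq q' <- p | q'.1 != M].
have sp' : (size p' <= n)%N.
  rewrite size_filter -ltnS; apply: leq_trans sp.
  rewrite -(count_predC (fun q' : R * K => q'.1 != M)) -addn1 leq_add2l.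
  by rewrite -has_count; apply/hasP; exists q => //=; rewrite negbK.
have HA' : forall q', q' \in p' -> A q'.1.
  by move=> q'; rewrite mem_filter => /andP[_]; apply: HA.
have S0' : Sc p' != 0%R.
  by move: S0; rewrite eS c0 add0r /Sc big_filter.
have [b Ab Hb] := IH p' sp' HA' S0'.
by exists b => //; rewrite eF c0 scale0r add0r -Hb /F big_filter.
Qed.

End S.

Theorem proposition3p5 (R : realType) (K : fieldType) (V : lmodType K)
    (l : V -> \bar R) :
  is_filtration l ->
  (best_approximation_property l <-> well_ordered_set (nonzero_values l)).
Proof.
move=> hl; split.
- move=> hbap A AS [a0 Aa0].
  have [//|Hn] := pselect (exists2 m, A m & forall a, A a -> (m <= a)%R).
  have [f hf] : {f : R -> V & forall b, A b -> l (f b) = b%:E}.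
    apply: (@choice _ _ (fun b y => A b -> l y = b%:E)) => b; case: (pselect (A b)) => Ab.
      by have [v _ ev] := AS b Ab; exists v.
    by exists 0%R.
  pose v := f a0.
  pose W := [set x : V | exists p : seq (R * K),
     [/\ forall q, q \in p -> A q.1, Sc p = 0%R & x = F f p]].
  have Wsub : is_subspace W.
    split.
    + by exists [::]; split => //; rewrite /Sc /F !big_nil.
    + move=> x y [p1 [H1 S1 ->]] [p2 [H2 S2 ->]]; exists (p1 ++ p2); split.
      * by move=> q; rewrite mem_cat => /orP[/H1|/H2].
      * by rewrite /Sc big_cat /= -/(Sc p1) -/(Sc p2) S1 S2 addr0.
      * by rewrite /F big_cat.
    + move=> c x [p [H1 S1 ->]]; exists (map (fun q => (q.1, c * q.2)%R) p); split.
      * move=> q /mapP [q' q'p] ->; exact: H1 q' q'p.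
      * by rewrite /Sc big_map /= -mulr_sumr -/(Sc p) S1 mulr0.
      * by rewrite /F big_map scaler_sumr; apply: eq_bigr => q _ /=; rewrite scalerA.
  have key : forall x, W x -> exists2 b, A b & l (v - x)%R = b%:E.
    move=> x [p [H1 S1 ->]].
    pose p' := (a0, 1%R) :: map (fun q => (q.1, - q.2)%R) p.
    have -> : (v - F f p)%R = F f p'.
      rewrite /F big_cons big_map scale1r /=; congr (_ + _)%R.
      by rewrite -sumrN; apply: eq_bigr => q _; rewrite scaleNr.
    apply: (mainF hl hf (n := size p')) => //.
      move=> q; rewrite inE => /orP[/eqP->//|]; move=> /mapP [q' q'p] ->; exact: H1 q' q'p.
    rewrite /Sc big_cons big_map /= sumrN -/(Sc p) S1 oppr0 addr0.
    exact: oner_neq0.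
  have nWv : ~ W v.
    move=> /key [b _]; rewrite subrr l0 //.
  have WT : W <> setT by move=> WT; apply: nWv; rewrite WT.
  have [w0 Ww0 Hw0] := hbap W Wsub WT v nWv.
  have [b Ab eb] := key w0 Ww0.
  have [a Aa ab] : exists2 a, A a & (a < b)%R.
    have [//|H] := pselect (exists2 a, A a & (a < b)%R); exfalso; apply: Hn; exists b => // a Aa.
    rewrite leNgt; apply/negP => ab; apply: H; by exists a.
  have Ww' : W (v - f a)%R.
    exists [:: (a0, 1%R); (a, -1)%R]; split.
    + by move=> q; rewrite !inE => /orP[|] /eqP ->.
    + by rewrite /Sc !big_cons big_nil /= addr0 subrr.
    + by rewrite /F !big_cons big_nil /= addr0 scale1r scaleN1r.
  have := Hw0 _ Ww'; have -> : (v - (v - f a))%R = f a by rewrite opprB addrC subrK.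
  rewrite eb hf // lee_fin.
  by rewrite leNgt ab.
- move=> hwo W Wsub WT v nWv.
  have fin : forall w, W w -> exists r, l (v - w)%R = r%:E.
    move=> w Ww; case E: (l (v - w)%R) => [r| |]; first by exists r.
    + by case: hl => /(_ (v - w)%R); rewrite E.
    + case: hl => _ /(_ (v - w)%R) [H _] _ _; have := H E.
      by move/eqP; rewrite subr_eq0 => /eqP ew; exfalso; apply: nWv; rewrite ew.
  pose B := [set r : R | exists2 w, W w & l (v - w)%R = r%:E].
  have BS : B `<=` nonzero_values l.
    move=> r [w Ww er]; exists (v - w)%R => //.
    by apply/eqP => /eqP; rewrite subr_eq0 => /eqP ew; apply: nWv; rewrite ew.
  have [|m [w0 Ww0 e0] Hm] := hwo B BS.
    case: Wsub => W0 _ _; have [r er] := fin _ W0; by exists r, 0%R.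
  exists w0 => // w Ww; have [r er] := fin _ Ww.
  by rewrite e0 er lee_fin; apply: Hm; exists w.
Qed.
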